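(* Let $\mathcal F$ be a filtration sequence, $r=(r_m)_{m\in\mathbb N}$ an extended integer sequence, and $E=(E_{m,n})_{m,n\in\mathbb N}$ an $r$-asymptotic e-process for $\mathcal P$ and $\mathcal F$. Then for every $\alpha\in(0,1)$, $$\limsup_{m\to\infty}\sup_{P\in\mathcal P}P\Big[\sup_{n\in\mathbb N,\ n\le r_m}E_{m,n}\ge \tfrac1\alpha\Big]\le\alpha .$$
   Context: $(\Omega,\mathcal A)$ is a measurable space, $\mathcal P$ a set of probability measures on it, $\mathbb N=\{0,1,\dots\}$; extended integers are elements of $\mathbb N\cup\{\infty\}$. Nonnegative random variables take values in $[0,\infty]$ with $\mathbb E_P[X]:=\infty$ if not $P$-integrable; $X_\infty:=\limsup_nX_n$. A filtration sequence is a family $(\mathcal F_{m,n})_{m,n\in\mathbb N}$ of sub-$\sigma$-algebras with each $\mathcal F_{m,\bullet}$ a filtration; adapted means $E_{m,n}$ is $\mathcal F_{m,n}$-measurable. For a filtration $\mathcal G$ and $\rho\in\mathbb N\cup\{\infty\}$, $\mathcal T(\rho,\mathcal G,\mathcal P)$ is the set of $\mathcal G$-stopping times $\tau$ (values in $\mathbb N\cup\{\infty\}$) with $P[\tau\le\rho]=1$ for all $P\in\mathcal P$; $\mathcal T(r,\mathcal F,\mathcal P)$ is the set of sequences $(\tau_m)$ with $\tau_m\in\mathcal T(r_m,\mathcal F_{m,\bullet},\mathcal P)$. A nonnegative adapted $E$ is an $r$-asymptotic e-process if for every $\tau\in\mathcal T(r,\mathcal F,\mathcal P)$, $\limsup_m\sup_{P\in\mathcal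 P}\mathbb E_P[E_{m,\tau_m}]\le 1$. *)

(* Defs.v *)
From HB Require Import structures.
From mathcomp Require Import all_boot all_order all_algebra.
From mathcomp Require Import all_classical all_reals all_analysis measurable_realfun.
Set Implicit Arguments. Unset Strict Implicit. Unset Printing Implicit Defensive.
Import Order.TTheory GRing.Theory Num.Theory.
Local Open Scope classical_set_scope.
Local Open Scope ring_scope.
Local Open Scope ereal_scope.

(** Extended integers N ∪ {∞}: [Some n] = n, [None] = ∞. *)
Definition enat := option nat.

Definition enat_le (a b : enat) : bool :=
  match a, b with
  | _, None => true
  | None, Some _ => false
  | Some x, Some y => (x <= y)%N
  end.

Section Defs.
Context {d : measure_display} {T : measurableType d} {R : realType}.

Definition sub_sigma_algebra (G : set (set T)) : Prop :=
  sigma_algebra setT G /\ G `<=` measurable.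

Definition filtration (G : nat -> set (set T)) : Prop :=
  (forall n, sub_sigma_algebra (G n)) /\ (forall n, G n `<=` G n.+1).

Definition filtration_sequence (F : nat -> nat -> set (set T)) : Prop :=
  forall m, filtration (F m).

Definition measurable_wrt (G : set (set T)) (X : T -> \bar R) : Prop :=
  forall B : set (\bar R), measurable B -> G (X @^-1` B).

Definition adapted (F : nat -> nat -> set (set T)) (E : nat -> nat -> T -> \bar R)
  : Prop := forall m n, measurable_wrt (F m n) (E m n).

Definition nonneg_process (E : nat -> nat -> T -> \bar R) : Prop :=
  forall m n w, 0 <= E m n w.

Definition stopping_time (G : nat -> set (set T)) (tau : T -> enat) : Prop :=
  forall n, G n [set w | enat_le (tau w) (Some n)].

Definition bounded_stopping_times (rho : enat) (G : nat -> set (set T))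
  (Ps : set (probability T R)) : set (T -> enat) :=
  [set tau | stopping_time G tau /\
     forall P : probability T R, Ps P -> P [set w | enat_le (tau w) rho] = 1].

Definition stopped (E : nat -> nat -> T -> \bar R) (m : nat) (tau : T -> enat)
  (w : T) : \bar R :=
  match tau w with
  | Some n => E m n w
  | None => limn_esup (fun n => E m n w)
  end.

Definition expect (P : probability T R) (X : T -> \bar R) : \bar R :=
  \int[P]_w X w.

Definition asymptotic_e_process (Ps : set (probability T R))
  (F : nat -> nat -> set (set T)) (r : nat -> enat)
  (E : nat -> nat -> T -> \bar R) : Prop :=
  nonneg_process E /\ adapted F E /\
  forall tau : nat -> T -> enat,
    (forall m, bounded_stopping_times (r m) (F m) Ps (tau m)) ->
    limn_esup (fun m => ereal_sup [set expect P (stopped E m (tau m)) | P in Ps])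
      <= 1.

End Defs.

(* Main.v *)
Require Import Defs.
From HB Require Import structures.
From mathcomp Require Import all_boot all_order all_algebra.
From mathcomp Require Import all_classical all_reals all_analysis measurable_realfun.
Import Order.TTheory GRing.Theory Num.Theory.
Local Open Scope classical_set_scope.
Local Open Scope ring_scope.
Local Open Scope ereal_scope.

Lemma limn_esup_scale (R : realType) (u v : (\bar R)^nat) (k : R) :
  (0 <= k)%R -> (forall m, u m <= k%:E * v m) ->
  limn_esup u <= k%:E * limn_esup v.
Proof.
move=> k0 uv; rewrite !limn_esup_lim.
have h : forall n, esups u n <= k%:E * esups v n.
  move=> n; apply: ge_ereal_sup => _ [j /= jn <-].
  apply: (le_trans (uv j)); apply: lee_wpmul2l; first by rewrite lee_fin.
  by apply: ereal_sup_ubound; exists j.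
rewrite -limeMl //; last exact: is_cvg_esups.
apply: lee_lim; first exact: is_cvg_esups.
  by apply: is_cvgeZl => //; exact: is_cvg_esups.
by apply: nearW.
Qed.

Lemma integral_mono_ge0 d (T : measurableType d) (R : realType)
  (mu : {measure set T -> \bar R}) (f g : T -> \bar R) :
  (forall x, 0 <= f x) -> (forall x, f x <= g x) ->
  \int[mu]_x f x <= \int[mu]_x g x.
Proof.
move=> f0 fg.
rewrite !ge0_integralE //; last by move=> x _; exact: le_trans (f0 x) (fg x).
apply: ereal_sup_le => _ [h hf <-]; exists h => //= x.
apply: le_trans (hf x) _.
by rewrite /patch; case: ifP.
Qed.

Lemma filt_mono d (T : measurableType d) (G : nat -> set (set T)) :
  filtration G -> forall k n, (k <= n)%N -> G k `<=` G n.
Proof.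
move=> [_ hG] k n; elim: n => [|n IH].
  by rewrite leqn0 => /eqP ->.
rewrite leq_eqVlt => /orP [/eqP -> //|].
by rewrite ltnS => /IH kn A /kn /hG.
Qed.

Arguments filt_mono {d T G}.

Lemma enat_le_trans a b c : enat_le a b -> enat_le b c -> enat_le a c.
Proof.
by case: a => [x|]; case: b => [y|]; case: c => [z|] //=; apply: leq_trans.
Qed.

Lemma enat_le_refl a : enat_le a a.
Proof. by case: a => // x /=. Qed.

Theorem stop_time_ok (d : measure_display) (T : measurableType d) (R : realType)
  (Ps : set (probability T R)) (F : nat -> nat -> set (set T))
  (r : nat -> enat) (E : nat -> nat -> T -> \bar R)
  (hF : filtration_sequence F)
  (hE : asymptotic_e_process Ps F r E)
  (c : R) (hc : (0 < c)%R) :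
  let hit m n w := `[< c%:E < E m n w /\ enat_le (Some n) (r m) >] in
  let tau m w := match pselect (exists n, hit m n w) with
                 | left H => Some (ex_minn H) | right _ => r m end in
  forall m, bounded_stopping_times (r m) (F m) Ps (tau m).
Proof.
move=> hit tau m; split; last first.
  move=> P _; rewrite [X in P X](_ : _ = setT) ?probability_setT //.
  apply/seteqP; split => // w _ /=; rewrite /tau.
  case: pselect => [H|_]; last exact: enat_le_refl.
  by case: ex_minnP => j /asboolP [_ ?].
move=> n.
have [hsub _] := hF m; have [[sF0 sFC sFU] _] := hsub n.
rewrite [X in F m n X](_ : _ = \bigcup_k (if (k <= n)%N then [set w | hit m k w]
   else [set w | enat_le (r m) (Some n)])).
  apply: sFU => k; case: ifPn => kn.
    have -> : [set w | hit m k w] = if enat_le (Some k) (r m)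
       then E m k @^-1` `]c%:E, +oo[ else set0.
      apply/seteqP; split => w /=.
        by move/asboolP => [h1 h2]; move: h2 => /= ->; rewrite /= in_itv /= h1.
      case: ifP => // h1; rewrite /= in_itv /= andbT => h2.
      by apply/asboolP; split.
    case: ifP => _ //.
    apply: (filt_mono (hF m) _ _ kn); apply: (hE.2.1 m k).
    exact: emeasurable_itv.
  case: (enat_le (r m) (Some n)).
    rewrite (_ : [set _ | true] = setT); last by apply/seteqP.
    by rewrite -(setD0 [set: T]); apply: sFC.
  rewrite (_ : [set _ | false] = set0) //; by apply/seteqP; split => w.
apply/seteqP; split => w /=.
  rewrite /tau; case: pselect => [H|nH].
    case: ex_minnP => j hj _ jn; exists j => //=; move: jn => /= ->; exact: hj.
  by move=> h; exists n.+1 => //=; rewrite ltnn.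
move=> [k _]; rewrite /tau; case: ifPn => kn.
  move=> hk; case: pselect => [H|nH]; last by exfalso; apply: nH; exists k.
  case: ex_minnP => j _ /(_ k hk) jk /=; exact: leq_trans jk kn.
move=> hr; case: pselect => [H|//].
case: ex_minnP => j /asboolP [_ jr] _.
exact: enat_le_trans jr hr.
Qed.

Theorem mainTheorem9 (d : measure_display) (T : measurableType d) (R : realType)
  (Ps : set (probability T R)) (F : nat -> nat -> set (set T))
  (r : nat -> enat) (E : nat -> nat -> T -> \bar R)
  (hF : filtration_sequence F)
  (hE : asymptotic_e_process Ps F r E)
  (alpha : R) (ha0 : (0 < alpha)%R) (ha1 : (alpha < 1)%R) :
  limn_esup (fun m =>
    ereal_sup [set P [set w | (alpha^-1)%:E <=
                 ereal_sup [set E m n w | n in [set n | enat_le (Some n) (r m)]]]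
              | P in Ps])
  <= alpha%:E.
Proof.
have [hE0 [hEad hEe]] := hE.
apply/lee_addgt0Pr => e e0.
have ae0 : (0 < alpha + e)%R by rewrite addr_gt0.
pose c := ((alpha + e)^-1)%R.
have hc : (0 < c)%R by rewrite invr_gt0.
have clt : (c < alpha^-1)%R.
  by rewrite /c ltf_pV2 ?posrE // ltrDl.
pose hit m n w := `[< c%:E < E m n w /\ enat_le (Some n) (r m) >].
pose tau m w := match pselect (exists n, hit m n w) with
                 | left H => Some (ex_minn H) | right _ => r m end.
have Hst : forall m, bounded_stopping_times (r m) (F m) Ps (tau m) :=
  @stop_time_ok _ _ _ _ _ _ _ hF hE c hc.
have meas_E m n : measurable_fun setT (E m n).
  move=> _ Y mY; rewrite setTI; apply: ((hF m).1 n).2; exact: hEad.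
pose A m := [set w | (alpha^-1)%:E <=
                 ereal_sup [set E m n w | n in [set n | enat_le (Some n) (r m)]]].
have mA m : measurable (A m).
  pose g k := E m (if r m is Some N then minn k N else k).
  have eq w : ereal_sup [set E m n w | n in [set n | enat_le (Some n) (r m)]]
      = esups (g^~ w) 0%N.
    rewrite /esups /sdrop /=; congr ereal_sup; apply/seteqP; split => _ [n hn <-].
    - case hr: (r m) hn => [N|] /= hn.
        by exists n => //; rewrite /g hr (minn_idPl hn).
      by exists n => //; rewrite /g hr.
    - case hr: (r m) => [N|].
        by exists (minn n N); rewrite ?hr /= ?geq_minr // /g hr.
      by exists n; rewrite ?hr // /g hr.
  rewrite (_ : A m = setT `&` ((fun w => esups (g^~w) 0%N) @^-1` `[(alpha^-1)%:E, +oo[)).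
    apply: measurable_fun_esups => //; last exact: emeasurable_itv.
    by move=> k; exact: meas_E.
  apply/seteqP; split => w /=; rewrite /A /= in_itv /= andbT eq //.
  by case.
have key m P : Ps P -> c%:E * P (A m) <= expect P (stopped E m (tau m)).
  move=> _.
  have -> : c%:E * P (A m) = \int[P]_x (c * \1_(A m) x)%:E.
    rewrite (integralZl_indic _ (fun _ => A m)) //= ?integral_indic ?setIT //.
    by move=> h; exfalso; move: h; rewrite ltNge (ltW hc).
  apply: integral_mono_ge0 => w.
    rewrite lee_fin; apply: mulr_ge0; first exact: ltW.
    by rewrite indicE; case: (_ \in _).
  rewrite /stopped /tau indicE.
  case: pselect => [H|nH].
    case: ex_minnP => j /asboolP [hj _] _.
    case: (w \in A m); rewrite /= ?mulr1 ?mulr0; first exact: ltW.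
    exact: hE0.
  case: (boolP (w \in A m)) => [/set_mem hw|_]; last first.
    rewrite mulr0; case: (r m) => [N|]; first exact: hE0.
    by apply: limf_esup_ge0 => // n; exact: hE0.
  exfalso; apply: nH.
  have : c%:E < ereal_sup [set E m n w | n in [set n | enat_le (Some n) (r m)]].
    by apply: lt_le_trans hw; rewrite lte_fin.
  move=> /ereal_sup_gt [_ [n hn <-] hcn]; exists n; exact/asboolP.
have bound m : ereal_sup [set P (A m) | P in Ps] <=
    (alpha + e)%:E * ereal_sup [set expect P (stopped E m (tau m)) | P in Ps].
  apply: ge_ereal_sup => _ [P PP <-].
  rewrite -(@lee_pmul2l _ c%:E) ?lte_fin // muleA -EFinM /c mulVf ?gt_eqF // mul1e.
  apply: le_trans (key m P PP) _; apply: ereal_sup_ubound; by exists P.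
have L := @limn_esup_scale R _ _ _ (ltW ae0) bound.
apply: (le_trans L).
rewrite -EFinD; apply: le_trans (lee_wpmul2l _ (hEe tau Hst)) _.
  by rewrite lee_fin ltW.
by rewrite mule1.
Qed.
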